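(* Let $V$ be a finite set of variables and $\mathcal C=\{C_1,\dots,C_m\}$ a set of betweenness constraints over $V$ containing no complete triple. Let $\phi:V\to\{0,1,2,3\}$ be chosen uniformly at random and let $X=w(\mathcal C,\phi)$. Then $\mathbb E[X^2]\ge \frac{11}{768}m$.
   Context: A betweenness constraint is $(v_i,\{v_j,v_k\})$ with $v_i,v_j,v_k\in V$ distinct; a bijection $\alpha:V\to\{1,\dots,|V|\}$ satisfies it if $\alpha(v_j)<\alpha(v_i)<\alpha(v_k)$ or $\alpha(v_k)<\alpha(v_i)<\alpha(v_j)$. For a constraint $C$, $vars(C)$ is its set of three variables; three distinct constraints $A,B,C\in\mathcal C$ form a complete triple if $vars(A)=vars(B)=vars(C)$. For $\phi:V\to\{0,1,2,3\}$ let $\ell_i(\phi)=|\phi^{-1}(i)|$. A random $\phi$-compatible bijection $\alpha$ is obtained by assigning, uniformly at random, the values $\sum_{i<j}\ell_i(\phi)+1,\dots,\sum_{i\le j}\ell_i(\phi)$ bijectively to the variables $v$ with $\phi(v)=j$, for each $j=0,1,2,3$. For a constraint $C_p$ let $\nu_p(\alpha)=1$ if $\alpha$ satisfies $C_p$ and $0$ otherwise; define $w(C_p,\phi)=\mathbb E[\nu_p(\alpha)]-1/3$, the expectation over a random $\phi$-compatible bijection $\alpha$ for fixed $\phi$, and $w(\mathcal C,\phi)=\sum_{p=1}^m w(C_p,\phi)$. *)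

(* Defs.v *)
From mathcomp Require Import all_boot all_order all_algebra.
Set Implicit Arguments. Unset Strict Implicit. Unset Printing Implicit Defensive.
Import Order.TTheory GRing.Theory Num.Theory.
Local Open Scope ring_scope.

(* A betweenness constraint (v_i, {v_j, v_k}) is represented by the triple
   (v_i, v_j, v_k); (i,j,k) and (i,k,j) denote the same constraint, see [ckey]. *)
Definition constraint (V : finType) := (V * V * V)%type.

Section Betweenness.
Variable V : finType.

Definition cmid (c : constraint V) : V := c.1.1.
Definition cend1 (c : constraint V) : V := c.1.2.
Definition cend2 (c : constraint V) : V := c.2.

Definition wf_constraint (c : constraint V) : bool :=
  [&& cmid c != cend1 c, cmid c != cend2 c & cend1 c != cend2 c].

Definition ckey (c : constraint V) : V * {set V} :=
  (cmid c, [set cend1 c; cend2 c]).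

Definition vars (c : constraint V) : {set V} :=
  [set cmid c; cend1 c; cend2 c].

Definition satisfies (alpha : V -> nat) (c : constraint V) : bool :=
  ((alpha (cend1 c) < alpha (cmid c)) && (alpha (cmid c) < alpha (cend2 c)))%N
  || ((alpha (cend2 c) < alpha (cmid c)) && (alpha (cmid c) < alpha (cend1 c)))%N.

Definition no_complete_triple (C : seq (constraint V)) : Prop :=
  forall A B D, A \in C -> B \in C -> D \in C ->
    ckey A != ckey B -> ckey B != ckey D -> ckey A != ckey D ->
    vars A = vars B -> vars B = vars D -> False.

Definition ell (phi : {ffun V -> 'I_4}) (i : 'I_4) : nat := #|[set v | phi v == i]|.

Definition lo (phi : {ffun V -> 'I_4}) (j : 'I_4) : nat :=
  (\sum_(i < 4 | (i < j)%N) ell phi i)%N.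

(* phi-compatible bijections V -> {0,...,|V|-1}  (0-indexed version of
   {1,...,|V|}; the shift is irrelevant for satisfaction). *)
Definition compatible (phi : {ffun V -> 'I_4}) (alpha : {ffun V -> 'I_#|V|}) : bool :=
  injectiveb alpha &&
  [forall v, (lo phi (phi v) <= alpha v < lo phi (phi v) + ell phi (phi v))%N].

Definition exp_sat (phi : {ffun V -> 'I_4}) (c : constraint V) : rat :=
  (#|[set alpha | compatible phi alpha && satisfies (fun v => nat_of_ord (alpha v)) c]|%:R)
  / (#|[set alpha | compatible phi alpha]|%:R).

Definition w1 (c : constraint V) (phi : {ffun V -> 'I_4}) : rat := exp_sat phi c - 3^-1.

Definition w (C : seq (constraint V)) (phi : {ffun V -> 'I_4}) : rat :=
  \sum_(c <- C) w1 c phi.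

Definition EX2 (C : seq (constraint V)) : rat :=
  (\sum_(phi : {ffun V -> 'I_4}) (w C phi) ^+ 2) / (#|{ffun V -> 'I_4}|%:R).

End Betweenness.

(* Main.v *)
Require Import Defs.
From mathcomp Require Import all_boot all_order all_algebra zify ring lra.
Import Order.TTheory GRing.Theory Num.Theory.
Local Open Scope ring_scope.
Definition tabl : seq int := [:: 0; 5; -1; -4; 5; 2; -2; -5; -1; -2; 2; 1; -4; -5; 1; 8; -10; -1; 7; 4; -1; 0; 2; -1; 7; 2; -4; -5; 4; -1; -5; 2; 2; -5; -1; 4; -5; -4; 2; 7; -1; 2; 0; -1; 4; 7; -1; -10; 8; 1; -5; -4; 1; 2; -2; -1; -5; -2; 2; 5; -4; -1; 5; 0].
Definition t24 (a b c : nat) : int := nth 0 tabl (16*a + 4*b + c).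
Definition w6 (a b c : nat) : int :=
  if (a == b) && (a == c) then 0 else if b == c then -2
  else if (a == b) || (a == c) then 1
  else if ((b < a < c) || (c < a < b))%N then 4 else -2.

Lemma tsum1 (b c : 'I_4) : \sum_(k < 4) t24 k b c = 0.
Proof.
rewrite !big_ord_recr big_ord0 /=.
by case: b => [[|[|[|[|b]]]] hb] //; case: c => [[|[|[|[|c]]]] hc] //; vm_compute.
Qed.
Lemma tsum2 (a c : 'I_4) : \sum_(k < 4) t24 a k c = 0.
Proof.
rewrite !big_ord_recr big_ord0 /=.
by case: a => [[|[|[|[|a]]]] ha] //; case: c => [[|[|[|[|c]]]] hc] //; vm_compute.
Qed.
Lemma tsum3 (a b : 'I_4) : \sum_(k < 4) t24 a b k = 0.
Proof.
rewrite !big_ord_recr big_ord0 /=.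
by case: a => [[|[|[|[|a]]]] ha] //; case: b => [[|[|[|[|b]]]] hb] //; vm_compute.
Qed.

Definition o0 : 'I_4 := @Ordinal 4 0 isT.
Definition o1 : 'I_4 := @Ordinal 4 1 isT.
Definition o2 : 'I_4 := @Ordinal 4 2 isT.
Definition o3 : 'I_4 := @Ordinal 4 3 isT.
Lemma sum4 (F : 'I_4 -> int) : \sum_(i<4) F i = F o0 + F o1 + F o2 + F o3.
Proof.
rewrite !big_ord_recr big_ord0 /= add0r.
by congr (_ + _ + _ + _); congr F; apply: val_inj.
Qed.
Ltac icomp := rewrite !sum4; vm_compute; reflexivity.
Lemma iw0 : \sum_(a<4)\sum_(b<4)\sum_(c<4) (w6 a b c * t24 a b c) = 264. Proof. icomp. Qed.
Lemma it0 : \sum_(a<4)\sum_(b<4)\sum_(c<4) (t24 a b c * t24 a b c) = 1056. Proof. icomp. Qed.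
Lemma iw1 : \sum_(a<4)\sum_(b<4)\sum_(c<4) (w6 a b c * t24 b a c) = -132. Proof. icomp. Qed.
Lemma it1 : \sum_(a<4)\sum_(b<4)\sum_(c<4) (t24 a b c * t24 b a c) = -528. Proof. icomp. Qed.
Lemma iw2 : \sum_(a<4)\sum_(b<4)\sum_(c<4) (w6 a b c * t24 b c a) = -132. Proof. icomp. Qed.
Lemma it2 : \sum_(a<4)\sum_(b<4)\sum_(c<4) (t24 a b c * t24 b c a) = -528. Proof. icomp. Qed.
Lemma iw3 : \sum_(a<4)\sum_(b<4)\sum_(c<4) (w6 a b c * t24 c a b) = -132. Proof. icomp. Qed.
Lemma it3 : \sum_(a<4)\sum_(b<4)\sum_(c<4) (t24 a b c * t24 c a b) = -528. Proof. icomp. Qed.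
Lemma iw4 : \sum_(a<4)\sum_(b<4)\sum_(c<4) (w6 a b c * t24 c b a) = -132. Proof. icomp. Qed.
Lemma it4 : \sum_(a<4)\sum_(b<4)\sum_(c<4) (t24 a b c * t24 c b a) = -528. Proof. icomp. Qed.

Lemma sum3_intr (F : 'I_4 -> 'I_4 -> 'I_4 -> int) :
  (\sum_(a<4)\sum_(b<4)\sum_(c<4) F a b c)%:~R =
  \sum_(a<4)\sum_(b<4)\sum_(c<4) ((F a b c)%:~R : rat).
Proof.
rewrite mulrz_sumr; apply: eq_bigr => a _; rewrite mulrz_sumr; apply: eq_bigr => b _.
by rewrite mulrz_sumr.
Qed.

Lemma uniq_map_inj_in (T1 T2 : eqType) (f : T1 -> T2) (s : seq T1) :
  uniq (map f s) -> {in s &, injective f}.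
Proof.
elim: s => [|a s IH] //= /andP[nf us] x y; rewrite !inE.
case/orP=> [/eqP->|xs]; case/orP=> [/eqP->|ys] //.
- by move=> e; move: nf; rewrite e map_f.
- by move=> e; move: nf; rewrite -e map_f.
- exact: IH.
Qed.

Lemma perm4 (T : eqType) (x y z x' y' z' : T) : x != y -> x != z -> y != z ->
  x' != y' -> x' != z' -> y' != z' -> x' != x ->
  x' \in [:: x; y; z] -> y' \in [:: x; y; z] -> z' \in [:: x; y; z] ->
  [\/ (x',y',z') = (y,x,z), (x',y',z') = (y,z,x), (x',y',z') = (z,x,y) | (x',y',z') = (z,y,x)].
Proof.
move=> xy xz yz xy' xz' yz' xx; rewrite !inE.
do 3 (case/orP=> [/eqP ?|/orP[/eqP ?|/eqP ?]]); subst;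
  first [ by constructor 1 | by constructor 2 | by constructor 3 | by constructor 4
        | match goal with H : is_true (?a != ?a) |- _ => by rewrite eqxx in H end ].
Qed.

Lemma sum_const_seq (T : Type) (r : seq T) (c : rat) : \sum_(i <- r) c = (size r)%:R * c.
Proof.
elim: r => [|a r IH]; first by rewrite big_nil mul0r.
by rewrite big_cons IH /= -add1n natrD mulrDl mul1r.
Qed.

Section S.
Variable V : finType.
Implicit Types phi : {ffun V -> 'I_4}.

Lemma sum_ell phi : (\sum_(i < 4) ell phi i)%N = #|V|.
Proof.
rewrite -sum1_card (partition_big (fun v => phi v) predT) //=.
apply: eq_bigr => i _; rewrite /ell sum1dep_card cardsE; apply: eq_card => v.
by [].
Qed.

Lemma lo_ell_eq phi (i : 'I_4) :
  (lo phi i + ell phi i = \sum_(k < 4 | (k <= i)%N) ell phi k)%N.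
Proof.
rewrite [RHS](bigD1 i) //= addnC /lo; congr (_ + _); apply: eq_bigl => k.
by rewrite ltn_neqAle andbC.
Qed.

Lemma lo_ell_lt phi (i j : 'I_4) : (i < j)%N -> (lo phi i + ell phi i <= lo phi j)%N.
Proof.
move=> ij; rewrite lo_ell_eq /lo [X in (_ <= X)%N]big_mkcond [X in (X <= _)%N]big_mkcond /=.
apply: leq_sum => k _; case: ifP => // ki; by rewrite (leq_ltn_trans ki ij).
Qed.

Lemma lo_ell_max phi (i : 'I_4) : (lo phi i + ell phi i <= #|V|)%N.
Proof.
rewrite lo_ell_eq -(sum_ell phi) big_mkcond /=.
apply: leq_sum => k _; by case: ifP.
Qed.


Lemma compat_bounds phi (al : {ffun V -> 'I_#|V|}) v : compatible phi al ->
  (lo phi (phi v) <= al v < lo phi (phi v) + ell phi (phi v))%N.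
Proof. by case/andP=> _ /forallP. Qed.

Lemma compat_lt phi (al : {ffun V -> 'I_#|V|}) u v : compatible phi al ->
  (phi u < phi v)%N -> (al u < al v)%N.
Proof.
move=> H lt; have := compat_bounds _ _ u H; have := compat_bounds _ _ v H.
have := lo_ell_lt phi _ _ lt; lia.
Qed.

Lemma compat_inj phi (al : {ffun V -> 'I_#|V|}) : compatible phi al -> injective al.
Proof. by case/andP=> /injectiveP. Qed.

Definition bset phi v := [set u | (phi u == phi v) && (enum_rank u < enum_rank v)%N].
Definition a0 phi v : nat := (lo phi (phi v) + #|bset phi v|)%N.

Lemma bset_lt phi v : (#|bset phi v| < ell phi (phi v))%N.
Proof.
apply: proper_card; apply/properP; split.
  by apply/subsetP => u; rewrite !inE => /andP[].
by exists v; rewrite !inE ?eqxx // ltnn andbF.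
Qed.

Lemma a0_lt phi v : (a0 phi v < #|V|)%N.
Proof. have := bset_lt phi v; have := lo_ell_max phi (phi v); rewrite /a0; lia. Qed.

Lemma bset_mono phi u v : phi u = phi v -> (enum_rank u < enum_rank v)%N ->
  (#|bset phi u| < #|bset phi v|)%N.
Proof.
move=> e lt; apply: proper_card; apply/properP; split.
  apply/subsetP => x; rewrite !inE e => /andP[-> /= h]; exact: ltn_trans h lt.
by exists u; rewrite !inE ?e ?eqxx ?lt // ltnn andbF.
Qed.

Definition al0 phi : {ffun V -> 'I_#|V|} := [ffun v => Ordinal (a0_lt phi v)].

Lemma al0_compat phi : compatible phi (al0 phi).
Proof.
apply/andP; split.
  apply/injectiveP => u v; rewrite !ffunE => /(congr1 val) /= E.
  have [e|ne] := eqVneq (phi u) (phi v).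
    case: (ltngtP (enum_rank u) (enum_rank v)) => h.
    - have := bset_mono _ _ _ e h; move: E; rewrite /a0 e; lia.
    - have := bset_mono _ _ _ (esym e) h; move: E; rewrite /a0 e; lia.
    - exact: enum_rank_inj (val_inj h).
  have := bset_lt phi u; have := bset_lt phi v; move: E; rewrite /a0.
  case: (ltngtP (phi u) (phi v)) => h.
  - have := lo_ell_lt phi _ _ h; lia.
  - have := lo_ell_lt phi _ _ h; lia.
  - by move: ne; rewrite (val_inj h) eqxx.
apply/forallP => v; rewrite ffunE /= /a0; have := bset_lt phi v; lia.
Qed.

Lemma compat_card_gt0 phi : (0 < #|[set al | compatible phi al]|)%N.
Proof. apply/card_gt0P; exists (al0 phi); by rewrite inE al0_compat. Qed.


Definition sw (x y v : V) : V := if v == x then y else if v == y then x else v.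

Lemma swK x y : involutive (sw x y).
Proof.
move=> v; rewrite /sw.
case: (eqVneq v x) => [->|vx]; first by rewrite eqxx; case: eqVneq => // ->.
case: (eqVneq v y) => [->|vy]; first by rewrite eqxx.
by rewrite (negbTE vx) (negbTE vy).
Qed.

Lemma sw_phi (phi : {ffun V -> 'I_4}) x y v : phi x = phi y -> phi (sw x y v) = phi v.
Proof.
move=> e; rewrite /sw; case: (eqVneq v x) => [->|_] //.
by case: (eqVneq v y) => [->|_].
Qed.

Definition swp x y (al : {ffun V -> 'I_#|V|}) : {ffun V -> 'I_#|V|} :=
  [ffun v => al (sw x y v)].

Lemma swpK x y : involutive (swp x y).
Proof. by move=> al; apply/ffunP => v; rewrite !ffunE swK. Qed.

Lemma swp_compat1 phi x y al : phi x = phi y -> compatible phi al ->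
  compatible phi (swp x y al).
Proof.
move=> e H; apply/andP; split.
  apply/injectiveP => u v; rewrite !ffunE => /(compat_inj _ _ H) h.
  by rewrite -(swK x y u) h swK.
apply/forallP => v; rewrite ffunE -(sw_phi _ _ _ v e); exact: compat_bounds _ _ _ H.
Qed.

Lemma swp_compat phi x y al : phi x = phi y ->
  compatible phi (swp x y al) = compatible phi al.
Proof.
move=> e; apply/idP/idP; last exact: swp_compat1.
by move=> /(swp_compat1 _ _ _ _ e); rewrite swpK.
Qed.

Definition cnt phi (P : pred {ffun V -> 'I_#|V|}) :=
  #|[set al | compatible phi al && P al]|.

Lemma cnt_split phi P Q : cnt phi P =
  (cnt phi (fun al => P al && Q al) + cnt phi (fun al => P al && ~~ Q al))%N.
Proof.
rewrite /cnt -!sum1dep_card (bigID Q) /=; congr (_ + _); apply: eq_bigl => al;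
by rewrite andbA.
Qed.

Lemma cnt_ext phi P Q : (forall al, compatible phi al -> P al = Q al) ->
  cnt phi P = cnt phi Q.
Proof.
move=> H; apply: eq_card => al; rewrite !inE.
by case C: (compatible phi al) => //=; rewrite H.
Qed.

Lemma cnt_swp phi x y P : phi x = phi y -> cnt phi (fun al => P (swp x y al)) = cnt phi P.
Proof.
move=> e; rewrite /cnt -!sum1dep_card [RHS](reindex_inj (can_inj (swpK x y))) /=.
by apply: eq_bigl => al; rewrite swp_compat.
Qed.

Lemma compat_ltE phi (al : {ffun V -> 'I_#|V|}) u v : compatible phi al ->
  phi u != phi v -> (al u < al v)%N = (phi u < phi v)%N.
Proof.
move=> H ne; case: (ltngtP (phi u) (phi v)) => h.
- exact: compat_lt H h.
- by apply/negbTE; rewrite -leqNgt ltnW // (compat_lt _ _ _ _ H h).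
- by move: ne; rewrite (val_inj h) eqxx.
Qed.


Lemma swL x y : sw x y x = y. Proof. by rewrite /sw eqxx. Qed.
Lemma swR x y : sw x y y = x. Proof. by rewrite /sw eqxx; case: eqVneq => // ->. Qed.
Lemma swD x y z : z != x -> z != y -> sw x y z = z.
Proof. by move=> /negbTE h1 /negbTE h2; rewrite /sw h1 h2. Qed.

Definition sat3 (al : {ffun V -> 'I_#|V|}) x y z : bool :=
  ((al y < al x) && (al x < al z))%N || ((al z < al x) && (al x < al y))%N.

Lemma compat_neq phi al u v : compatible phi al -> u != v -> (al u != al v :> nat).
Proof.
move=> H; apply: contra => /eqP /val_inj /(compat_inj _ _ H) ->; exact: eqxx.
Qed.

Lemma w1E p phi : wf_constraint p ->
  w1 p phi = (w6 (phi (cmid p)) (phi (cend1 p)) (phi (cend2 p)))%:~R / 6%:R.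
Proof.
case: p => [[x y] z]; rewrite /wf_constraint /cmid /cend1 /cend2 /= => /and3P[xy xz yz].
rewrite /w1 /exp_sat.
have totE : #|[set al | compatible phi al]| = cnt phi predT.
  by apply: eq_card => al; rewrite !inE andbT.
have tot0 := compat_card_gt0 phi; rewrite totE in tot0 *.
have -> : #|[set al | compatible phi al && satisfies (fun v => nat_of_ord (al v)) (x, y, z)]|
   = cnt phi (fun al => sat3 al x y z) by [].
have split2 : forall P, cnt phi predT = (cnt phi P + cnt phi (fun al => ~~ P al))%N.
  move=> P; rewrite (cnt_split phi predT P); congr (_ + _); exact: cnt_ext.
have [exy|nxy] := eqVneq (phi x) (phi y); have [exz|nxz] := eqVneq (phi x) (phi z).
-
  have E1 : cnt phi (fun al => sat3 al y x z) = cnt phi (fun al => sat3 al x y z).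
    rewrite -(cnt_swp _ _ _ (fun al => sat3 al x y z) exy); apply: cnt_ext => al _.
    by rewrite /sat3 !ffunE swL swR swD // eq_sym.
  have E2 : cnt phi (fun al => sat3 al z x y) = cnt phi (fun al => sat3 al x y z).
    rewrite -(cnt_swp _ _ _ (fun al => sat3 al x y z) exz); apply: cnt_ext => al _.
    rewrite /sat3 !ffunE swL swR swD // 1?eq_sym //; lia.
  have E3 : cnt phi predT = (3 * cnt phi (fun al => sat3 al x y z))%N.
    rewrite (split2 (fun al => sat3 al x y z)).
    rewrite (cnt_split phi (fun al => ~~ sat3 al x y z) (fun al => sat3 al y x z)).
    have -> : cnt phi (fun al => ~~ sat3 al x y z && sat3 al y x z) =
              cnt phi (fun al => sat3 al y x z).
      apply: cnt_ext => al H; have := compat_neq _ _ _ _ H xy;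
      have := compat_neq _ _ _ _ H xz; have := compat_neq _ _ _ _ H yz; rewrite /sat3; lia.
    have -> : cnt phi (fun al => ~~ sat3 al x y z && ~~ sat3 al y x z) =
              cnt phi (fun al => sat3 al z x y).
      apply: cnt_ext => al H; have := compat_neq _ _ _ _ H xy;
      have := compat_neq _ _ _ _ H xz; have := compat_neq _ _ _ _ H yz; rewrite /sat3; lia.
    rewrite E1 E2; lia.
  rewrite /w6 -exy -exz !eqxx /= E3 natrM.
  have : (cnt phi (fun al => sat3 al x y z))%:R != 0 :> rat.
    by rewrite pnatr_eq0 -lt0n; move: tot0; rewrite E3; lia.
  move=> nz; field; by rewrite nz.
-
  have E1 : cnt phi (fun al => ~~ sat3 al x y z) = cnt phi (fun al => sat3 al x y z).
    rewrite -(cnt_swp _ _ _ (fun al => sat3 al x y z) exy); apply: cnt_ext => al H.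
    have zx : z != x by rewrite eq_sym.
    have zy : z != y by rewrite eq_sym.
    rewrite /sat3 !ffunE swL swR (swD _ _ _ zx zy).
    have nyz : phi y != phi z by rewrite -exy.
    have h1 := compat_ltE _ _ _ _ H nxz.
    have h2 := compat_ltE _ _ _ _ H nyz; rewrite -exy in h2.
    have h3 := compat_ltE _ _ z x H; rewrite eq_sym in h3; have {}h3 := h3 nxz.
    have h4 := compat_ltE _ _ z y H; rewrite eq_sym in h4; have {}h4 := h4 nyz; rewrite -exy in h4.
    have nxzn : (nat_of_ord (phi x) != phi z) := nxz. have := compat_neq _ _ _ _ H xy; lia.
  have E3 : cnt phi predT = (2 * cnt phi (fun al => sat3 al x y z))%N.
    by rewrite (split2 (fun al => sat3 al x y z)) E1; lia.
  have nxz' : (nat_of_ord (phi x) == phi z) = false by exact/negbTE.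
  rewrite /w6 -exy eqxx nxz' /= E3 natrM.
  have : (cnt phi (fun al => sat3 al x y z))%:R != 0 :> rat.
    by rewrite pnatr_eq0 -lt0n; move: tot0; rewrite E3; lia.
  move=> nz; field; by rewrite nz.
-
  have E1 : cnt phi (fun al => ~~ sat3 al x y z) = cnt phi (fun al => sat3 al x y z).
    rewrite -(cnt_swp _ _ _ (fun al => sat3 al x y z) exz); apply: cnt_ext => al H.
    have yx : y != x by rewrite eq_sym.
    rewrite /sat3 !ffunE swL swR (swD _ _ _ yx yz).
    have nzy : phi z != phi y by rewrite -exz.
    have h1 := compat_ltE _ _ _ _ H nxy.
    have h2 := compat_ltE _ _ _ _ H nzy; rewrite -exz in h2.
    have h3 := compat_ltE _ _ y x H; rewrite eq_sym in h3; have {}h3 := h3 nxy.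
    have h4 := compat_ltE _ _ y z H; rewrite eq_sym in h4; have {}h4 := h4 nzy; rewrite -exz in h4.
    have nxyn : (nat_of_ord (phi x) != phi y) := nxy. have := compat_neq _ _ _ _ H xz; lia.
  have E3 : cnt phi predT = (2 * cnt phi (fun al => sat3 al x y z))%N.
    by rewrite (split2 (fun al => sat3 al x y z)) E1; lia.
  have nxy' : (nat_of_ord (phi x) == phi y) = false by exact/negbTE.
  have nyx' : (nat_of_ord (phi y) == phi x) = false by rewrite eq_sym.
  rewrite /w6 -exz eqxx nxy' nyx' /= E3 natrM.
  have : (cnt phi (fun al => sat3 al x y z))%:R != 0 :> rat.
    by rewrite pnatr_eq0 -lt0n; move: tot0; rewrite E3; lia.
  move=> nz; field; by rewrite nz.
-
  set s := (((phi y < phi x) && (phi x < phi z)) || ((phi z < phi x) && (phi x < phi y)))%N.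
  have E1 : cnt phi (fun al => sat3 al x y z) = cnt phi (fun _ => s).
    apply: cnt_ext => al H.
    have h1 := compat_ltE _ _ _ _ H nxz.
    have h2 := compat_ltE _ _ _ _ H nxy.
    have h3 := compat_ltE _ _ z x H; rewrite eq_sym in h3; have {}h3 := h3 nxz.
    have h4 := compat_ltE _ _ y x H; rewrite eq_sym in h4; have {}h4 := h4 nxy.
    by rewrite /sat3 h1 h2 h3 h4.
  have nxy' : (nat_of_ord (phi x) == phi y) = false by exact/negbTE.
  have nxz' : (nat_of_ord (phi x) == phi z) = false by exact/negbTE.
  have C0 : cnt phi (fun _ => false) = 0%N.
    by apply/eqP; rewrite cards_eq0; apply/eqP/setP => al; rewrite !inE andbF.
  rewrite E1 /w6 nxy' nxz' /=.
  case: (eqVneq (nat_of_ord (phi y)) (phi z)) => [eyz|nyz].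
    have -> : s = false by rewrite /s eyz; lia.
    by rewrite C0 mul0r; field.
  rewrite -/s; case: (boolP s) => hs; rewrite ?hs ?(negbTE hs).
    have -> : cnt phi (fun _ => true) = cnt phi predT by [].
    have nz : (cnt phi predT)%:R != 0 :> rat by rewrite pnatr_eq0 -lt0n.
    by rewrite divff //; field.
  by rewrite C0 mul0r; field.
Qed.


Definition upd (psi : {ffun V -> 'I_4}) u k : {ffun V -> 'I_4} :=
  [ffun v => if v == u then k else psi v].

Lemma upd_id psi u k l : upd (upd psi u k) u l = upd psi u l.
Proof. by apply/ffunP => v; rewrite !ffunE; case: eqP. Qed.

Lemma upd_eq psi u : upd psi u (psi u) = psi.
Proof. by apply/ffunP => v; rewrite !ffunE; case: eqP => // ->. Qed.

Lemma updE psi u k v : upd psi u k v = if v == u then k else psi v.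
Proof. by rewrite ffunE. Qed.

Lemma sum_upd u (H : {ffun V -> 'I_4} -> rat) :
  \sum_phi H phi = \sum_(psi : {ffun V -> 'I_4} | psi u == ord0) \sum_(k < 4) H (upd psi u k).
Proof.
rewrite (partition_big (fun phi : {ffun V -> 'I_4} => phi u) predT) //=.
rewrite [RHS]exchange_big /=; apply: eq_bigr => k _.
rewrite (reindex_onto (fun psi => upd psi u k) (fun phi => upd phi u ord0)).
  apply: eq_bigl => psi; rewrite updE eqxx eqxx /= upd_id.
  apply/eqP/eqP => [<-|<-]; first by rewrite updE eqxx.
  exact: upd_eq.
by move=> phi /eqP <-; rewrite upd_id upd_eq.
Qed.


Definition Fq (q : constraint V) (phi : {ffun V -> 'I_4}) : rat :=
  (t24 (phi (cmid q)) (phi (cend1 q)) (phi (cend2 q)))%:~R.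

Lemma orth (g : 'I_4 -> 'I_4 -> 'I_4 -> rat) x y z q u :
  wf_constraint q -> u \in vars q -> u != x -> u != y -> u != z ->
  \sum_(phi : {ffun V -> 'I_4}) g (phi x) (phi y) (phi z) * Fq q phi = 0.
Proof.
move=> wq uq ux uy uz; rewrite (sum_upd u); apply: big1 => psi _.
have ex : (x == u) = false by rewrite eq_sym; exact/negbTE.
have ey : (y == u) = false by rewrite eq_sym; exact/negbTE.
have ez : (z == u) = false by rewrite eq_sym; exact/negbTE.
under eq_bigr => k _ do rewrite !updE ex ey ez.
rewrite -big_distrr /= /Fq; apply/eqP; rewrite mulf_eq0; apply/orP; right; apply/eqP.
move: wq; rewrite /wf_constraint => /and3P[n12 n13 n23].
move: uq; rewrite /vars !inE; case/orP => [/orP [/eqP ->|/eqP ->]|/eqP ->].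
- under eq_bigr => k _ do rewrite !updE eqxx eq_sym (negbTE n12) eq_sym (negbTE n13).
  by rewrite -mulrz_sumr tsum1.
- under eq_bigr => k _ do rewrite !updE eqxx (negbTE n12) eq_sym (negbTE n23).
  by rewrite -mulrz_sumr tsum2.
- under eq_bigr => k _ do rewrite !updE eqxx (negbTE n13) (negbTE n23).
  by rewrite -mulrz_sumr tsum3.
Qed.


Definition key3 x y z (phi : {ffun V -> 'I_4}) : 'I_4 * 'I_4 * 'I_4 := (phi x, phi y, phi z).
Definition fam3 x y z (t : 'I_4 * 'I_4 * 'I_4) (v : V) : pred 'I_4 :=
  if v == x then pred1 t.1.1 else if v == y then pred1 t.1.2
  else if v == z then pred1 t.2 else predT.

Lemma key_fam x y z t phi : x != y -> x != z -> y != z ->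
  (key3 x y z phi == t) = (phi \in family (fam3 x y z t)).
Proof.
move=> xy xz yz; have yx : (y == x) = false by rewrite eq_sym; exact/negbTE.
have zx : (z == x) = false by rewrite eq_sym; exact/negbTE.
have zy : (z == y) = false by rewrite eq_sym; exact/negbTE.
case: t => [[a b] c]; apply/eqP/familyP.
  case=> <- <- <- v; rewrite /fam3 /=.
  case: eqP => [->|_]; first by rewrite inE.
  case: eqP => [->|_]; first by rewrite inE.
  by case: eqP => [->|_]; first by rewrite inE.
move=> H; have := H x; have := H y; have := H z.
rewrite /key3 /fam3 /= yx zx zy !eqxx !inE => /eqP-> /eqP-> /eqP->; by [].
Qed.

Lemma cnt_key x y z t : x != y -> x != z -> y != z ->
  #|[set phi | key3 x y z phi == t]| = #|[set phi | key3 x y z phi == (ord0, ord0, ord0)]|.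
Proof.
move=> xy xz yz.
rewrite (eq_card (B := family (fam3 x y z t))); last by move=> phi; rewrite inE key_fam.
rewrite [RHS](eq_card (B := family (fam3 x y z (ord0, ord0, ord0)))); last first.
  by move=> phi; rewrite inE key_fam.
rewrite !card_family; congr foldr; apply: eq_map => v; rewrite /fam3.
by case: eqP => _; [rewrite !card1 | case: eqP => _; [rewrite !card1 | case: eqP => _; rewrite ?card1]].
Qed.

Lemma marg x y z (G : 'I_4 -> 'I_4 -> 'I_4 -> rat) : x != y -> x != z -> y != z ->
  64%:R * \sum_(phi : {ffun V -> 'I_4}) G (phi x) (phi y) (phi z) =
  #|{ffun V -> 'I_4}|%:R * \sum_(a < 4) \sum_(b < 4) \sum_(c < 4) G a b c.
Proof.
move=> xy xz yz.
set c0 : rat := #|[set phi | key3 x y z phi == (ord0, ord0, ord0)]|%:R.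
have Ec : forall t : 'I_4 * 'I_4 * 'I_4, \sum_(phi | key3 x y z phi == t) (1 : rat) = c0.
  move=> t; rewrite /c0 -(cnt_key x y z t xy xz yz) -sum1dep_card natr_sum.
  by apply: eq_bigr.
have EG : \sum_(phi : {ffun V -> 'I_4}) G (phi x) (phi y) (phi z) =
          c0 * \sum_(t : 'I_4 * 'I_4 * 'I_4) G t.1.1 t.1.2 t.2.
  rewrite (partition_big (key3 x y z) predT) //= big_distrr /=; apply: eq_bigr => t _.
  rewrite -(Ec t) big_distrl /=; apply: eq_bigr => phi /eqP <-; by rewrite mul1r.
have EN : #|{ffun V -> 'I_4}|%:R = 64%:R * c0 :> rat.
  have -> : #|{ffun V -> 'I_4}|%:R = \sum_(phi : {ffun V -> 'I_4}) (1 : rat).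
    by rewrite -sum1_card natr_sum.
  rewrite (partition_big (key3 x y z) predT) //=.
  rewrite (eq_bigr (fun _ => c0)) => [|t _]; last by rewrite -(Ec t).
  by rewrite sumr_const !card_prod !card_ord mulr_natl.
rewrite EN; transitivity (64%:R * (c0 * \sum_(t : 'I_4 * 'I_4 * 'I_4) G t.1.1 t.1.2 t.2)).
  by congr (_ * _); exact: EG.
rewrite -mulrA; congr (_ * _); congr (_ * _).
rewrite -(pair_big predT predT (fun (ab : 'I_4 * 'I_4) c => G ab.1 ab.2 c)) /=.
rewrite -(pair_big predT predT (fun a b => \sum_(c < 4) G a b c)) /=.
by [].
Qed.


Definition NN : rat := #|{ffun V -> 'I_4}|%:R.

Lemma margi x y z (h : nat -> nat -> nat -> int) : x != y -> x != z -> y != z ->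
  \sum_(phi : {ffun V -> 'I_4}) (h (phi x) (phi y) (phi z))%:~R =
  NN / 64%:R * (\sum_(a<4)\sum_(b<4)\sum_(c<4) h a b c)%:~R.
Proof.
move=> xy xz yz; have := marg x y z (fun a b c => (h a b c)%:~R) xy xz yz.
rewrite -(sum3_intr (fun a b c => h a b c)) /= => E.
apply: (@mulfI _ 64%:R); first by [].
by rewrite E /NN; field.
Qed.

Definition S1 p q := \sum_(phi : {ffun V -> 'I_4}) w1 p phi * Fq q phi.
Definition S2 p q := \sum_(phi : {ffun V -> 'I_4}) Fq p phi * Fq q phi.
Definition T p q := 12%:R^-1 * S1 p q - 576%:R^-1 * S2 p q.

Lemma S1E p q : wf_constraint p -> S1 p q =
  (\sum_(phi : {ffun V -> 'I_4}) (w6 (phi (cmid p)) (phi (cend1 p)) (phi (cend2 p)) *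
     t24 (phi (cmid q)) (phi (cend1 q)) (phi (cend2 q)))%:~R) / 6%:R.
Proof.
move=> wp; rewrite /S1 big_distrl; apply: eq_bigr => phi _.
by rewrite w1E // /Fq intrM mulrAC.
Qed.

Lemma S2E p q : S2 p q =
  \sum_(phi : {ffun V -> 'I_4}) (t24 (phi (cmid p)) (phi (cend1 p)) (phi (cend2 p)) *
     t24 (phi (cmid q)) (phi (cend1 q)) (phi (cend2 q)))%:~R.
Proof. by apply: eq_bigr => phi _; rewrite /Fq intrM. Qed.

Lemma Tself p : wf_constraint p -> T p p = NN * 11%:R / 384%:R.
Proof.
move=> wp; have := wp; rewrite /wf_constraint => /and3P[xy xz yz].
rewrite /T (S1E _ _ wp) S2E.
rewrite (margi _ _ _ (fun a b c => w6 a b c * t24 a b c)) //.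
rewrite (margi _ _ _ (fun a b c => t24 a b c * t24 a b c)) //.
by rewrite iw0 it0; field.
Qed.

Lemma vars_card (p : constraint V) : wf_constraint p -> #|vars p| = 3%N.
Proof.
case/and3P => xy xz yz; rewrite /vars -setUA cardsU1 cards2 yz !inE.
by rewrite (negbTE xy) (negbTE xz).
Qed.

Lemma Tzero p q : wf_constraint p -> wf_constraint q -> vars q != vars p -> T p q = 0.
Proof.
move=> wp wq nv.
have [u uq up] : exists2 u, u \in vars q & u \notin vars p.
  have [sub|/subsetPn //] := boolP (vars q \subset vars p).
  move: nv; have := eqEcard (vars q) (vars p); rewrite sub vars_card // vars_card //=.
  by move=> ->.
move: up; rewrite /vars !inE !negb_or; case/andP; case/andP => ux uy uz.
rewrite /T.
have -> : S1 p q = 0.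
  rewrite /S1; under eq_bigr => phi _ do rewrite w1E //.
  exact: (orth (fun a b c => (w6 a b c)%:~R / 6%:R) _ _ _ _ _ wq uq ux uy uz).
have -> : S2 p q = 0.
  exact: (orth (fun a b c => (t24 a b c)%:~R) _ _ _ _ _ wq uq ux uy uz).
by rewrite !mulr0 subr0.
Qed.


Lemma e12_vars (p : constraint V) : wf_constraint p ->
  [set cend1 p; cend2 p] = vars p :\ cmid p.
Proof.
case/and3P => xy xz yz; apply/setP => v; rewrite !inE.
case: (eqVneq v (cmid p)) => [->|_] /=; last by [].
by rewrite (negbTE xy) (negbTE xz).
Qed.

Lemma key_eq (p q : constraint V) : wf_constraint p -> wf_constraint q ->
  vars q = vars p -> cmid q = cmid p -> ckey q = ckey p.
Proof.
by move=> wp wq ev em; rewrite /ckey (e12_vars _ wp) (e12_vars _ wq) ev em.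
Qed.

Lemma Tpart (p q : constraint V) : wf_constraint p -> wf_constraint q ->
  vars q = vars p -> cmid q != cmid p -> T p q = - (NN * 11%:R / 768%:R).
Proof.
move=> wp wq ev nm.
rewrite /T (S1E _ _ wp) S2E.
move: wp wq ev nm; case: p => [[x y] z]; case: q => [[x' y'] z'].
rewrite /wf_constraint /vars /cmid /cend1 /cend2 /= => /and3P[xy xz yz] /and3P[xy' xz' yz'] ev nm.
have mem : forall v, v \in [set x'; y'; z'] -> v \in [:: x; y; z].
  by move=> v; rewrite ev !inE -orbA.
have hx : x' \in [:: x; y; z] by apply: mem; rewrite !inE eqxx.
have hy : y' \in [:: x; y; z] by apply: mem; rewrite !inE eqxx ?orbT.
have hz : z' \in [:: x; y; z] by apply: mem; rewrite !inE eqxx ?orbT.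
case: (perm4 _ _ _ _ _ _ _ xy xz yz xy' xz' yz' nm hx hy hz) => [] [-> -> ->].
- rewrite (margi _ _ _ (fun a b c => w6 a b c * t24 b a c)) //.
  rewrite (margi _ _ _ (fun a b c => t24 a b c * t24 b a c)) //.
  by rewrite iw1 it1; field.
- rewrite (margi _ _ _ (fun a b c => w6 a b c * t24 b c a)) //.
  rewrite (margi _ _ _ (fun a b c => t24 a b c * t24 b c a)) //.
  by rewrite iw2 it2; field.
- rewrite (margi _ _ _ (fun a b c => w6 a b c * t24 c a b)) //.
  rewrite (margi _ _ _ (fun a b c => t24 a b c * t24 c a b)) //.
  by rewrite iw3 it3; field.
- rewrite (margi _ _ _ (fun a b c => w6 a b c * t24 c b a)) //.
  rewrite (margi _ _ _ (fun a b c => t24 a b c * t24 c b a)) //.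
  by rewrite iw4 it4; field.
Qed.

End S.

Arguments T {V} p q.
Arguments Tself {V} p _.
Arguments Tzero {V} p q _ _ _.
Arguments Tpart {V} p q _ _ _ _.
Arguments key_eq {V} p q _ _ _ _.

Arguments Fq {V} q phi.
Arguments S1 {V} p q.
Arguments S2 {V} p q.



Lemma dsum (I J : Type) (r : seq I) (s : seq J) (K : finType) (f : I -> J -> K -> rat) :
  \sum_(i <- r) \sum_(j <- s) \sum_(k : K) f i j k =
  \sum_(k : K) \sum_(i <- r) \sum_(j <- s) f i j k.
Proof.
rewrite [RHS]exchange_big; apply: eq_bigr => i _.
by rewrite exchange_big.
Qed.

Lemma pointwise (I : Type) (r : seq I) (a b : I -> rat) :
  \sum_(i <- r) \sum_(j <- r) (12%:R^-1 * (a i * b j) - 576%:R^-1 * (b i * b j)) <=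
  (\sum_(i <- r) a i) ^+ 2.
Proof.
set Xv := \sum_(i <- r) a i; set Hv := \sum_(j <- r) b j.
have -> : \sum_(i <- r) \sum_(j <- r) (12%:R^-1 * (a i * b j) - 576%:R^-1 * (b i * b j)) =
      12%:R^-1 * (Xv * Hv) - 576%:R^-1 * (Hv * Hv).
  under eq_bigr => i _ do rewrite sumrB -!mulr_sumr.
  by rewrite sumrB -!mulr_sumr -!mulr_suml.
rewrite -subr_ge0.
have -> : Xv ^+ 2 - (12%:R^-1 * (Xv * Hv) - 576%:R^-1 * (Hv * Hv)) = (Xv - Hv / 24%:R) ^+ 2.
  by field.
exact: sqr_ge0.
Qed.


Theorem lemma7 (V : finType) (C : seq (constraint V)) :
  all (@wf_constraint V) C ->
  uniq (map (@ckey V) C) ->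
  no_complete_triple C ->
  EX2 C >= (11%:R / 768%:R) * (size C)%:R.
Proof.
move=> wfC uk nct.
have uC : uniq C := map_uniq uk.
have kinj := uniq_map_inj_in _ _ _ _ uk.
have wfin : forall p, p \in C -> wf_constraint p by apply/allP.
have Np : 0 < NN V by rewrite /NN ltr0n card_ffun expn_gt0 card_ord.
set c := NN V * 11%:R / 768%:R.
have perp : forall p, p \in C -> c <= \sum_(q <- C) T p q.
  move=> p pC.
  have E1 : \sum_(q <- C) T p q = T p p + \sum_(q <- C | q != p) T p q :=
    bigD1_seq p pC uC.
  have E2 : \sum_(q <- C | q != p) T p q =
     \sum_(q <- C | (q != p) && (vars q == vars p)) T p q +
     \sum_(q <- C | (q != p) && ~~ (vars q == vars p)) T p q := bigID _ _ _.
  have E3 : \sum_(q <- C | (q != p) && ~~ (vars q == vars p)) T p q = 0.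
    apply: big1_seq => q /andP[/andP[_ nv] qC]; apply: Tzero; rewrite ?wfin //.
  rewrite E1 E2 E3 addr0 Tself ?wfin //.
  rewrite -big_filter.
  have fmem : forall q, q \in [seq q <- C | (q != p) && (vars q == vars p)] ->
      [/\ q \in C, q != p & vars q = vars p].
    by move=> q; rewrite mem_filter => /andP[/andP[qp /eqP vq] qC].
  have Tq : forall q, q \in [seq q <- C | (q != p) && (vars q == vars p)] -> T p q = - c.
    move=> q /fmem [qC qp vq]; apply: Tpart; rewrite ?wfin //.
    apply/negP => /eqP em; move: qp; rewrite (kinj q p qC pC) ?eqxx //.
    by apply: key_eq; rewrite ?wfin.
  have fu : uniq [seq q <- C | (q != p) && (vars q == vars p)] := filter_uniq _ uC.
  move: Tq fmem fu.
  case: [seq q <- C | _] => [|q1 [|q2 r]] Tq fmem fu.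
  - by rewrite big_nil addr0 /c; lra.
  - by rewrite big_cons big_nil addr0 Tq ?mem_head // /c; lra.
  - exfalso.
    have [q1C q1p v1] := fmem q1 (mem_head _ _).
    have q2in : q2 \in q1 :: q2 :: r by rewrite !inE eqxx orbT.
    have [q2C q2p v2] := fmem q2 q2in.
    have q12 : q1 != q2 by move: fu => /= /andP[]; rewrite inE negb_or => /andP[].
    have kne : forall a b, a \in C -> b \in C -> a != b -> ckey a != ckey b.
      move=> a b aC bC; apply: contra => /eqP e; apply/eqP; exact: kinj.
    apply: (nct p q1 q2) => //.
    + by rewrite eq_sym in q1p; exact: kne.
    + exact: kne.
    + by rewrite eq_sym in q2p; exact: kne.
    + by rewrite v1 v2.
have sumT : (size C)%:R * c <= \sum_(p <- C) \sum_(q <- C) T p q.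
  rewrite -(sum_const_seq _ C c) big_seq [X in _ <= X]big_seq.
  by apply: ler_sum => p pC; exact: perp.
have ET : forall p q, T p q = \sum_(phi : {ffun V -> 'I_4})
    (12%:R^-1 * (w1 p phi * Fq q phi) - 576%:R^-1 * (Fq p phi * Fq q phi)).
  by move=> p q; rewrite /T /S1 /S2 sumrB !mulr_sumr.
have pw : \sum_(p <- C) \sum_(q <- C) T p q <=
          \sum_(phi : {ffun V -> 'I_4}) (w C phi) ^+ 2.
  have -> : \sum_(p <- C) \sum_(q <- C) T p q =
     \sum_(p <- C) \sum_(q <- C) \sum_(phi : {ffun V -> 'I_4})
       (12%:R^-1 * (w1 p phi * Fq q phi) - 576%:R^-1 * (Fq p phi * Fq q phi)).
    by apply: eq_bigr => p _; apply: eq_bigr => q _; exact: ET.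
  rewrite (dsum _ _ C C _ (fun p q phi =>
       12%:R^-1 * (w1 p phi * Fq q phi) - 576%:R^-1 * (Fq p phi * Fq q phi))).
  apply: ler_sum => phi _.
  exact: (pointwise _ C (fun p => w1 p phi) (fun q => Fq q phi)).
have Np2 : 0 < (#|{ffun V -> 'I_4}|%:R : rat) by rewrite ltr0n card_ffun expn_gt0 card_ord.
rewrite /EX2.
rewrite (ler_pdivlMr _ _ Np2).
have -> : 11%:R / 768%:R * (size C)%:R * #|{ffun V -> 'I_4}|%:R = (size C)%:R * c.
  by rewrite /c /NN; field.
exact: le_trans sumT pw.
Qed.
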